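(* Let $G=(V,E)$ be a finite graph without isolated vertices, let $p\in[0,1]$, $t\ge0$, let $\bar{\mathbf x}\in\{\mathcal R,\mathcal B\}^V$ be a configuration and $u\in V$. For $k\in\mathbb N$ let $\mathcal E_k$ be the event that $x_u^{(t+1)}\neq\mathcal B$ under the $(k,p,\mathcal B)$-Edge-Majority dynamics. Then for every $h\in\mathbb N_0$, $$\Pr(\mathcal E_{2h+1}\mid \mathbf X^{(t)}=\bar{\mathbf x})=\Pr(\mathcal E_{2h+2}\mid \mathbf X^{(t)}=\bar{\mathbf x}).$$ The same identity holds when $\mathcal E_k$ is defined with respect to the $(k,p,\mathcal B)$-Node-Majority dynamics instead.
   Context: States are in $\{\mathcal R,\mathcal B\}$; $x_u^{(t)}$ is the state of node $u$ at round $t$ and $\mathbf X^{(t)}$ the configuration at round $t$. $(k,p,\mathcal B)$-Edge-Majority: at each round every node $u$ independently samples $k$ neighbours uniformly at random with replacement; for each sampled neighbour $v$, independently, $u$ sees $v$ as $\mathcal B$ with probability $p$ and otherwise sees $v$'s true current state; $u$'s next state is the state seen more often in the sample, ties broken uniformly at random. $(k,p,\mathcal B)$-Node-Majority: at each round every node $u$ independently samples $k$ neighbours uniformly at random with replacement and draws an independent Bernoulli($p$) variable $M$; if $M=1$ its next state is $\mathcal B$; otherwise its next state is the majority among the true current states of the sampled neighbours, ties broken uniformly at random. *)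

(* Defs.v *)
From HB Require Import structures.
From mathcomp Require Import all_boot all_order all_algebra.
Set Implicit Arguments. Unset Strict Implicit. Unset Printing Implicit Defensive.
Import Order.TTheory GRing.Theory Num.Theory.
Local Open Scope ring_scope.

Definition state := bool.
Definition Blue : state := true.
Definition Red : state := false.

Definition nbhd (V : finType) (e : rel V) (u : V) : {set V} := [set v | e u v].

Definition bern (R : pzRingType) (q : R) (b : bool) : R := if b then q else 1 - q.

Definition sample_w (R : fieldType) (V : finType) (e : rel V) (u : V) (k : nat)
  (s : {ffun 'I_k -> V}) : R :=
  if [forall i, s i \in nbhd e u] then (#|nbhd e u|%:R ^-1) ^+ k else 0.

(* Majority of the seen states; ties broken by the fair coin c. *)
Definition majority (k : nat) (seen : 'I_k -> state) (c : bool) : state :=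
  let nB := #|[set i | seen i == Blue]| in
  let nR := #|[set i | seen i == Red]| in
  if (nR < nB)%N then Blue else if (nB < nR)%N then Red else c.

(* Randomness of u: sampled neighbours s,
   independent noise flags f (f i = true: v seen as Blue), tie coin c. *)
Definition edge_kernel (R : fieldType) (V : finType) (e : rel V) (p : R) (k : nat)
  (x : {ffun V -> state}) (u : V) (b : state) : R :=
  \sum_(s : {ffun 'I_k -> V}) \sum_(f : {ffun 'I_k -> bool}) \sum_(c : bool)
    sample_w R e u s * (\prod_(i < k) bern p (f i)) * bern (2%:R ^-1) c *
    (if majority (fun i => if f i then Blue else x (s i)) c == b then 1 else 0).

Definition node_kernel (R : fieldType) (V : finType) (e : rel V) (p : R) (k : nat)
  (x : {ffun V -> state}) (u : V) (b : state) : R :=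
  \sum_(s : {ffun 'I_k -> V}) \sum_(M : bool) \sum_(c : bool)
    sample_w R e u s * bern p M * bern (2%:R ^-1) c *
    (if (if M then Blue else majority (fun i => x (s i)) c) == b then 1 else 0).

(* One-round transition: nodes update independently, so
   Pr(X^(t+1) = y | X^(t) = x) = prod_w K x w (y w). *)
Definition transition (R : fieldType) (V : finType)
  (K : {ffun V -> state} -> V -> state -> R)
  (x y : {ffun V -> state}) : R := \prod_(w : V) K x w (y w).

Definition prob_not_blue (R : fieldType) (V : finType)
  (K : {ffun V -> state} -> V -> state -> R) (x : {ffun V -> state}) (u : V) : R :=
  \sum_(y : {ffun V -> state} | y u != Blue) transition K x y.

(* Main.v *)
Require Import Defs.
From HB Require Import structures.
From mathcomp Require Import all_boot all_order all_algebra.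
From mathcomp Require Import zify ring lra.
From Stdlib Require Import FunctionalExtensionality.
Import Order.TTheory GRing.Theory Num.Theory.
Local Open Scope ring_scope.
Section Arith.
Variable R : realFieldType.
Variable q : R.

Definition Tsum (k n : nat) : R :=
  \sum_(0 <= j < n) ('C(k,j))%:R * q^+j * (1-q)^+(k-j).

Lemma Tstep k n : (n < k)%N ->
  Tsum k.+1 n.+1 = Tsum k n.+1 - ('C(k,n))%:R * q^+n.+1 * (1-q)^+(k-n).
Proof.
elim: n => [|n IH] Hn.
  rewrite /Tsum !big_nat1 !bin0 !subn0 exprS; ring.
rewrite /Tsum big_nat_recr //= -/(Tsum _ _) IH; last by lia.
rewrite /Tsum [in RHS]big_nat_recr //= -/(Tsum _ _).
rewrite binS natrD subSS.
have -> : (k - n = (k - n.+1).+1)%N by lia.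
rewrite !exprS; ring.
Qed.

Definition mR (k j : nat) : R :=
  if (k - j < j)%N then 0 else if (j < k - j)%N then 1 else 2^-1.

Definition CC (k : nat) : R :=
  \sum_(0 <= j < k.+1) ('C(k,j))%:R * (q^+j * (1-q)^+(k-j) * mR k j).

Lemma CC_odd_even h : CC (2 * h + 1) = CC (2 * h + 2).
Proof.
rewrite /CC.
rewrite (@big_cat_nat _ _ _ h.+1) //=; last by lia.
rewrite [X in _ + X]big1_seq ?addr0; last first.
  move=> j; rewrite mem_index_iota => /andP [H1 H2].
  by rewrite /mR ifT ?mulr0 ?mul0r //; lia.
rewrite [in RHS](@big_cat_nat _ _ _ h.+1) //=; last by lia.
rewrite [in RHS](@big_cat_nat _ _ _ h.+2 h.+1) //=; last by lia.
rewrite [X in _ + (_ + X)]big1_seq ?addr0; last first.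
  move=> j; rewrite mem_index_iota => /andP [H1 H2].
  by rewrite /mR ifT ?mulr0 ?mul0r //; lia.
rewrite big_nat1.
have E1 : \sum_(0 <= i < h.+1) ('C(2 * h + 1, i))%:R * (q ^+ i * (1 - q) ^+ (2 * h + 1 - i) * mR (2 * h + 1) i)
   = Tsum (2*h+1) h.+1.
  rewrite /Tsum big_nat_cond [RHS]big_nat_cond; apply: eq_bigr => j /andP [/andP [_ Hj] _].
  rewrite /mR ifF; last by lia.
  by rewrite ifT ?mulr1 ?mulrA //; lia.
have E2 : \sum_(0 <= i < h.+1) ('C(2 * h + 2, i))%:R * (q ^+ i * (1 - q) ^+ (2 * h + 2 - i) * mR (2 * h + 2) i)
   = Tsum (2*h+1).+1 h.+1.
  rewrite /Tsum big_nat_cond [RHS]big_nat_cond; apply: eq_bigr => j /andP [/andP [_ Hj] _].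
  rewrite /mR ifF; last by lia.
  have -> : (2 * h + 2 = (2*h+1).+1)%N by lia.
  by rewrite ifT ?mulr1 ?mulrA //; lia.
rewrite E1 E2 Tstep; last by lia.
rewrite /mR ifF; last by lia.
rewrite ifF; last by lia.
have -> : (2 * h + 2 = (2*h+1).+1)%N by lia.
rewrite binS.
have -> : 'C(2 * h + 1, h.+1) = 'C(2 * h + 1, h).
  rewrite -bin_sub; last by lia.
  by congr 'C(_,_); lia.
have -> : ((2 * h + 1).+1 - h.+1 = 2 * h + 1 - h)%N by lia.
rewrite natrD exprS.
by field.
Qed.
End Arith.
Section Count.
Variable R : realFieldType.

Lemma sum_sets k (F : nat -> R) :
  \sum_(A : {set 'I_k}) F #|A| = \sum_(0 <= j < k.+1) ('C(k,j))%:R * F j.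
Proof.
transitivity (\sum_(A : {set 'I_k}) \sum_(0 <= j < k.+1) (if #|A| == j then F j else 0)).
  apply: eq_bigr => A _.
  have HA : (#|A| <= k)%N by by have := max_card (mem A); rewrite card_ord.
  rewrite (bigD1_seq #|A|) ?mem_index_iota ?iota_uniq //=.
  rewrite eqxx big1 ?addr0 // => j /negbTE; rewrite eq_sym => ->; done.
rewrite exchange_big; apply: eq_bigr => j _.
rewrite -big_mkcond /= sumr_const.
have -> : #|[pred A : {set 'I_k} | #|A| == j]| = 'C(k, j).
  by rewrite -cardsE card_draws card_ord.
by rewrite mulr_natl.
Qed.

Lemma sum_ffun_count k (F : nat -> R) :
  \sum_(g : {ffun 'I_k -> bool}) F #|[set i | g i == true]|
  = \sum_(0 <= j < k.+1) ('C(k,j))%:R * F j.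
Proof.
rewrite -sum_sets.
rewrite (reindex (fun A : {set 'I_k} => [ffun i => i \in A])) /=.
  apply: eq_bigr => A _; have -> // : [set i | [ffun i0 => i0 \in A] i == true] = A; apply/setP => i; by rewrite inE ffunE eqb_id.
exists (fun g : {ffun 'I_k -> bool} => [set i | g i == true]) => [A _ | g _].
  by apply/setP => i; rewrite inE ffunE eqb_id.
by apply/ffunP => i; rewrite ffunE inE eqb_id.
Qed.
End Count.
Section Gen.
Variable R : realFieldType.

Lemma push (I A B : finType) (W : I -> A -> R) (phi : I -> A -> B) (F : (I -> B) -> R) :
 \sum_(f : {ffun I -> A}) (\prod_i W i (f i)) * F (fun i => phi i (f i))
 = \sum_(g : {ffun I -> B}) (\prod_i \sum_(a | phi i a == g i) W i a) * F g.
Proof.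
transitivity (\sum_(g : {ffun I -> B}) \sum_(f : {ffun I -> A})
   (\prod_i (if phi i (f i) == g i then W i (f i) else 0)) * F g); last first.
  apply: eq_bigr => g _.
  rewrite (eq_bigr (fun i => \sum_a (if phi i a == g i then W i a else 0))); last first.
    by move=> i _; rewrite big_mkcond.
  by rewrite bigA_distr_bigA mulr_suml.
rewrite exchange_big; apply: eq_bigr => f _.
rewrite (bigD1 [ffun i => phi i (f i)]) //= [X in _ = _ + X]big1 ?addr0 => [|g Hg].
  congr (_ * _); first by apply: eq_bigr => i _; rewrite ffunE eqxx.
  by congr F; apply: functional_extensionality => i; rewrite ffunE.
case: (pickP (fun i => phi i (f i) != g i)) => [i Hi | H0].
  by rewrite (bigD1 i) //= ifN // mul0r mul0r.
exfalso; move/negP: Hg; apply; apply/eqP/ffunP => i; rewrite ffunE.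
by move: (H0 i) => /negbFE /eqP.
Qed.

Lemma prob_nb (V : finType) (K : {ffun V -> state} -> V -> state -> R) x u
  (HK : forall w, K x w true + K x w false = 1) : prob_not_blue K x u = K x u false.
Proof.
rewrite /prob_not_blue /transition.
pose F := fun w (b : bool) => if w == u then (if b then 0 else K x w b) else K x w b.
transitivity (\sum_(y : {ffun V -> bool}) \prod_w F w (y w)).
  rewrite big_mkcond; apply: eq_bigr => y _.
  rewrite (bigD1 u) //= [in RHS](bigD1 u) //= /F eqxx.
  have -> : \prod_(w | w != u) K x w (y w) = \prod_(w | w != u) (if w == u then (if y w then 0 else K x w (y w)) else K x w (y w)).
    by apply: eq_bigr => w /negbTE ->.
  by case: (y u) => /=; rewrite ?mul0r.
have H1 : \prod_(w | w != u) \sum_(b : bool) F w b = 1.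
  by apply: big1 => w Hw; rewrite big_bool /F (negbTE Hw); exact: HK.
rewrite -bigA_distr_bigA (bigD1 u) //= H1 mulr1.
by rewrite big_bool /F eqxx /= add0r.
Qed.
End Gen.
Section Maj.
Variable R : realFieldType.

Definition Hc k (g : 'I_k -> state) : R :=
  \sum_(c : bool) bern (2%:R^-1 : R) c * (if majority g c == Red then 1 else 0).

Lemma Hc_mR k (g : {ffun 'I_k -> bool}) : Hc k g = mR R k #|[set i | g i == true]|.
Proof.
have HR : #|[set i | g i == Red]| = (k - #|[set i | g i == true]|)%N.
  have Hc' := cardsC [set i | g i == true]; rewrite card_ord in Hc'.
  have -> : (k - #|[set i | g i == true]| = #|~: [set i | g i == true]|)%N by lia.
  by apply: eq_card => i; rewrite !inE; case: (g i).
rewrite /Hc /majority HR /mR big_bool /bern /=.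
rewrite /Blue /Red; set nB := #|[set i | g i == true]|.
by case: (k - nB < nB)%N; case: (nB < k - nB)%N => /=; field.
Qed.

Lemma prodQ k (Q : bool -> R) (g : {ffun 'I_k -> bool}) :
  \prod_i Q (g i) = Q true ^+ #|[set i | g i == true]| * Q false ^+ (k - #|[set i | g i == true]|).
Proof.
rewrite (bigID (fun i => g i == true)) /=.
congr (_ * _).
  rewrite (eq_bigr (fun _ => Q true)) => [|i /eqP ->//].
  by rewrite prodr_const; congr (_ ^+ _); apply: eq_card => i; rewrite inE.
rewrite (eq_bigr (fun _ => Q false)) => [|i]; last by case: (g i).
rewrite prodr_const; congr (_ ^+ _).
have Hc' := cardsC [set i | g i == true]; rewrite card_ord in Hc'.
  have -> : (k - #|[set i | g i == true]| = #|~: [set i | g i == true]|)%N by lia.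
by apply: eq_card => i; rewrite !inE.
Qed.

Definition Maj k (Q : bool -> R) : R :=
  \sum_(g : {ffun 'I_k -> bool}) (\prod_i Q (g i)) * Hc k g.

Lemma Maj_CC k Q (HQ : Q false = 1 - Q true) : Maj k Q = CC R (Q true) k.
Proof.
rewrite /Maj /CC -(@sum_ffun_count R k (fun j => Q true ^+ j * (1 - Q true) ^+ (k - j) * mR R k j)).
by apply: eq_bigr => g _; rewrite prodQ Hc_mR HQ.
Qed.

Lemma Maj_odd_even h Q (HQ : Q false = 1 - Q true) : Maj (2*h+1) Q = Maj (2*h+2) Q.
Proof. by rewrite !Maj_CC // CC_odd_even. Qed.
End Maj.
Section Kern.
Variable R : realFieldType.
Variable V : finType.
Variable e : rel V.
Variable p : R.

Definition g0 (u v : V) : R := if v \in nbhd e u then (#|nbhd e u|%:R)^-1 else 0.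

Lemma sw_prod k u (s : {ffun 'I_k -> V}) : sample_w R e u s = \prod_i g0 u (s i).
Proof.
rewrite /sample_w; case: forallP => H.
  rewrite (eq_bigr (fun _ => (#|nbhd e u|%:R)^-1)) => [|i _]; last by rewrite /g0 H.
  by rewrite prodr_const card_ord.
case: (pickP (fun i => s i \notin nbhd e u)) => [i Hi|H0].
  by rewrite (bigD1 i) //= /g0 ifN // mul0r.
exfalso; apply: H => i; move: (H0 i) => /negbFE //.
Qed.

Lemma sum_g0 u : (exists w, e u w) -> \sum_v g0 u v = 1.
Proof.
move=> [w Hw]; rewrite /g0 -big_mkcond /= sumr_const -(mulr_natr ((#|nbhd e u|%:R)^-1)) mulVf //.
rewrite pnatr_eq0 -lt0n; apply/card_gt0P; exists w; by rewrite inE.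
Qed.

Lemma sum_sw k u : (exists w, e u w) -> \sum_(s : {ffun 'I_k -> V}) sample_w R e u s = 1.
Proof.
move=> H.
rewrite (eq_bigr (fun s : {ffun 'I_k -> V} => \prod_i g0 u (s i))) => [|s _]; last exact: sw_prod.
by rewrite -(bigA_distr_bigA (fun (i : 'I_k) (v : V) => g0 u v)) big1 // => i _; apply: sum_g0.
Qed.

Lemma sum_bern (q : R) : \sum_(b : bool) bern q b = 1.
Proof. by rewrite big_bool /bern /=; ring. Qed.

Lemma sum_prod_bern k (q : R) : \sum_(f : {ffun 'I_k -> bool}) \prod_i bern q (f i) = 1.
Proof. by rewrite -(bigA_distr_bigA (fun (i : 'I_k) (b : bool) => bern q b)) big1 // => i _; exact: sum_bern. Qed.

Definition beta (x : {ffun V -> state}) v (b : bool) : R :=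
  \sum_(a | (if a then Blue else x v) == b) bern p a.
Definition Qe x u (b : bool) : R := \sum_v g0 u v * beta x v b.

Lemma edge_Maj k x u : edge_kernel e p k x u Red = Maj R k (Qe x u).
Proof.
rewrite /edge_kernel.
transitivity (\sum_(s : {ffun 'I_k -> V}) sample_w R e u s *
   \sum_(f : {ffun 'I_k -> bool}) (\prod_i bern p (f i)) * Hc R k (fun i => if f i then Blue else x (s i))).
  apply: eq_bigr => s _; rewrite mulr_sumr; apply: eq_bigr => f _.
  by rewrite /Hc !mulr_sumr; apply: eq_bigr => c _; rewrite !mulrA.
transitivity (\sum_(s : {ffun 'I_k -> V}) sample_w R e u s *
   \sum_(g : {ffun 'I_k -> bool}) (\prod_i beta x (s i) (g i)) * Hc R k g).
  apply: eq_bigr => s _; congr (_ * _).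
  exact: (@push R 'I_k bool bool (fun i a => bern p a) (fun i a => if a then Blue else x (s i)) (Hc R k)).
transitivity (\sum_(s : {ffun 'I_k -> V}) \sum_(g : {ffun 'I_k -> bool})
   (\prod_i (g0 u (s i) * beta x (s i) (g i))) * Hc R k g).
  apply: eq_bigr => s _; rewrite sw_prod mulr_sumr; apply: eq_bigr => g _.
  by rewrite mulrA big_split.
rewrite exchange_big; apply: eq_bigr => g _; rewrite -mulr_suml; congr (_ * _).
by rewrite /Qe bigA_distr_bigA.
Qed.

Lemma beta_sum x v : beta x v true + beta x v false = 1.
Proof. rewrite /beta big_mkcond big_bool [X in _ + X]big_mkcond big_bool /Blue /=; case: (x v); rewrite /bern /=; ring. Qed.

Lemma Qe_norm x u : (exists w, e u w) -> Qe x u false = 1 - Qe x u true.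
Proof.
move=> H.
have HS : Qe x u true + Qe x u false = 1.
  rewrite /Qe -big_split /= -(sum_g0 u H); apply: eq_bigr => v _.
  by rewrite -mulrDr beta_sum mulr1.
by rewrite -HS addrAC subrr add0r.
Qed.

Definition Qn x u (b : bool) : R := \sum_(v | x v == b) g0 u v.

Lemma node_Maj k x u : node_kernel e p k x u Red = (1 - p) * Maj R k (Qn x u).
Proof.
rewrite /node_kernel.
transitivity (\sum_(s : {ffun 'I_k -> V}) (1 - p) * (sample_w R e u s * Hc R k (fun i => x (s i)))).
  apply: eq_bigr => s _; rewrite big_bool /=.
  rewrite big1 ?add0r; last by move=> c _; rewrite mulr0.
  rewrite /Hc !mulr_sumr; apply: eq_bigr => c _; rewrite /bern /=.
  by move: (sample_w _ _ _ _) (if c then _ else _) (if _ == _ then _ else _) => a b d; ring.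
rewrite -mulr_sumr; congr (_ * _).
rewrite (eq_bigr (fun s : {ffun 'I_k -> V} => (\prod_i g0 u (s i)) * Hc R k (fun i => x (s i)))) => [|s _]; last by rewrite sw_prod.
by rewrite (@push R 'I_k V bool (fun i v => g0 u v) (fun i v => x v) (Hc R k)).
Qed.

Lemma Qn_norm x u : (exists w, e u w) -> Qn x u false = 1 - Qn x u true.
Proof.
move=> H.
have HS : Qn x u true + Qn x u false = 1.
  rewrite /Qn -(sum_g0 u H) [RHS](bigID (fun v => x v == true)) /=; congr (_ + _).
  by apply: eq_bigl => v; case: (x v).
by rewrite -HS addrAC subrr add0r.
Qed.

Lemma edge_norm k x w : (exists w', e w w') ->
  edge_kernel e p k x w true + edge_kernel e p k x w false = 1.
Proof.
move=> H; rewrite /edge_kernel -big_split /=.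
transitivity (\sum_(s : {ffun 'I_k -> V}) sample_w R e w s *
   ((\sum_(f : {ffun 'I_k -> bool}) \prod_i bern p (f i)) * \sum_(c : bool) bern (2%:R^-1 : R) c)).
  apply: eq_bigr => s _; rewrite -big_split /= mulr_suml mulr_sumr; apply: eq_bigr => f _.
  rewrite -big_split /= !mulr_sumr; apply: eq_bigr => c _.
  by case: (majority _ _) => /=; ring.
rewrite sum_prod_bern sum_bern mulr1.
under eq_bigr do rewrite mulr1.
exact: sum_sw.
Qed.

Lemma node_norm k x w : (exists w', e w w') ->
  node_kernel e p k x w true + node_kernel e p k x w false = 1.
Proof.
move=> H; rewrite /node_kernel -big_split /=.
transitivity (\sum_(s : {ffun 'I_k -> V}) sample_w R e w s *
   ((\sum_(M : bool) bern p M) * \sum_(c : bool) bern (2%:R^-1 : R) c)).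
  apply: eq_bigr => s _; rewrite -big_split /= mulr_suml mulr_sumr; apply: eq_bigr => M _.
  rewrite -big_split /= !mulr_sumr; apply: eq_bigr => c _.
  by case: (if M then _ else _) => /=; ring.
rewrite !sum_bern mulr1.
under eq_bigr do rewrite mulr1.
exact: sum_sw.
Qed.
End Kern.

Theorem proposition3p4 (R : realFieldType) (V : finType) (e : rel V)
  (e_sym : symmetric e) (e_irr : irreflexive e)
  (no_isolated : forall v : V, exists w : V, e v w)
  (p : R) (hp0 : 0 <= p) (hp1 : p <= 1)
  (x : {ffun V -> state}) (u : V) (h : nat) :
  prob_not_blue (edge_kernel e p (2 * h + 1)) x u
    = prob_not_blue (edge_kernel e p (2 * h + 2)) x u
  /\ prob_not_blue (node_kernel e p (2 * h + 1)) x u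
    = prob_not_blue (node_kernel e p (2 * h + 2)) x u.
Proof.
split.
  rewrite !prob_nb => [||w]; last exact: edge_norm.
    by rewrite !edge_Maj Maj_odd_even // Qe_norm.
  by move=> w; exact: edge_norm.
rewrite !prob_nb => [||w]; last exact: node_norm.
  by rewrite !node_Maj Maj_odd_even // Qn_norm.
by move=> w; exact: node_norm.
Qed.
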